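(* Let $\pi$ be an $R[G_n]$-module and $1\le k\le n$. Then $(\pi^{(k,\psi_R)})^\vee\cong(\pi^\vee)^{(k,\psi_R^{-1})}$.
   Context: Let $p$ be a prime, $q$ a power of $p$, $G_n=\mathrm{GL}_n(\mathbb{F}_q)$, $R$ a commutative Noetherian $\mathbb{Z}[\frac1p,\zeta_p]$-algebra, $\psi:(\mathbb{F}_q,+)\to\mathbb{Z}[\frac1p,\zeta_p]^\times$ nontrivial, $\psi_R$ its image in $R^\times$. $(-)^\vee$ is the $R$-linear dual with contragredient action. For a character $\chi\in\{\psi_R,\psi_R^{-1}\}$: $P_n$ is the mirabolic subgroup (last row $(0,\dots,0,1)$), $U_n=\{\begin{psmallmatrix}I_{n-1}&y\\0&1\end{psmallmatrix}\}$ with character $\chi(y_{n-1})$; for an $R[P_n]$-module $V$, $\Phi^-_\chi(V)=V/\langle uv-\chi(u)v:u\in U_n\rangle$ (an $R[P_{n-1}]$-module) and $\Psi^-(V)=V/\langle uv-v:u\in U_n\rangle$ (an $R[G_{n-1}]$-module); $\pi^{(k,\chi)}=\Psi^-(\Phi^-_\chi)^{k-1}(\pi|_{P_n})$, an $R[G_{n-k}]$-module. *)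

(* Defs.v *)
From HB Require Import structures.
From mathcomp Require Import all_boot all_order all_algebra all_field.
From mathcomp Require Import boolp classical_sets functions.
Set Implicit Arguments.
Unset Strict Implicit.
Unset Printing Implicit Defensive.
Import GRing.Theory.
Local Open Scope ring_scope.

Section Defs.
Variables (F : finFieldType) (R : comPzRingType).

Definition is_ideal (I : R -> Prop) : Prop :=
  [/\ I 0, (forall x y, I x -> I y -> I (x + y)) & (forall a x, I x -> I (a * x))].

Definition noetherian_ring : Prop :=
  forall I : R -> Prop, is_ideal I ->
    exists s : seq R, forall x, I x <->
      exists c : 'I_(size s) -> R, x = \sum_(i < size s) c i * s`_i.

(** A Z[1/p, zeta_p]-algebra structure on R, i.e. (since
    Z[1/p,zeta_p] = Z[x, 1/p]/(Phi_p(x)) for p prime) the image zeta of zeta_p,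
    which is a root of Phi_p = 1 + x + ... + x^(p-1), with p invertible in R. *)
Definition Zp_zeta_algebra (p : nat) (zeta : R) : Prop :=
  (exists r : R, p%:R * r = 1) /\ \sum_(i < p) zeta ^+ i = 0.

(** Image psi_R in R of the character psi : (F,+) -> Z[1/p,zeta_p]^x.
    Any such character takes values in the p-th roots of unity zeta_p^j,
    hence is a -> zeta_p ^ (f a) for an additive f : F -> Z/p; psi is
    nontrivial iff f is. *)
Definition psiR (p : nat) (zeta : R) (f : F -> 'Z_p) (a : F) : R :=
  zeta ^+ (f a : nat).

Definition psiR_inv (p : nat) (zeta : R) (f : F -> 'Z_p) (a : F) : R :=
  psiR zeta f (- a).

Definition is_GLrep (n : nat) (V : lmodType R) (rho : 'M[F]_n -> V -> V) : Prop :=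
  [/\ (forall g, g \in unitmx -> forall (a : R) (u v : V),
          rho g (a *: u + v) = a *: rho g u + rho g v),
      (forall v, rho 1%:M v = v) &
      (forall g h, g \in unitmx -> h \in unitmx ->
          forall v, rho (g *m h) v = rho g (rho h v))].

(** Entry (i,j) of an m x m matrix, indices as naturals (0 outside range). *)
Definition mx_at (m : nat) (g : 'M[F]_m) (i j : nat) : F :=
  match (insub i : option 'I_m), (insub j : option 'I_m) with
  | Some i', Some j' => g i' j'
  | _, _ => 0
  end.

Definition emb_mx (n m : nat) (g : 'M[F]_m) : 'M[F]_n :=
  \matrix_(i < n, j < n)
    (if (i < m)%N && (j < m)%N then mx_at g i j else (i == j)%:R).

(** The element (I_(m-1), y; 0, 1) of U_m <= P_m <= G_m, embedded in G_n,
    where y = (y 0, ..., y (m-2)) in F^(m-1). *)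
Definition unip_mx (n m : nat) (y : nat -> F) : 'M[F]_n :=
  \matrix_(i < n, j < n)
    ((i == j)%:R + (if (j == m.-1 :> nat) && (i < m.-1)%N then y (nat_of_ord i) else 0)).

Definition rspan (M : lmodType R) (S : M -> Prop) (x : M) : Prop :=
  exists (s : seq M) (c : 'I_(size s) -> R),
    (forall i, (i < size s)%N -> S s`_i) /\ x = \sum_(i < size s) c i *: s`_i.

(** Generators u v - chi(u) v  (u in U_m, v in the module C), where the
    character of U_m is u(y) |-> chi (y_(m-1)), i.e. chi of the last entry
    (0-based index m-2) of y. *)
Definition rel_gens (M : lmodType R) (C : M -> Prop) (n : nat)
    (act : 'M[F]_n -> M -> M) (m : nat) (chi : F -> R) (x : M) : Prop :=
  exists (y : nat -> F) (v : M), C v /\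
    x = act (unip_mx n m y) v - chi (y m.-2) *: v.

(** Generators of the kernel of V -> (Phi^-_chi)^j (V), V an R[P_n]-module:
    the j-th step (0-based j') uses U_(n-j'). *)
Fixpoint phi_gens (M : lmodType R) (C : M -> Prop) (n : nat)
    (act : 'M[F]_n -> M -> M) (chi : F -> R) (j : nat) : M -> Prop :=
  match j with
  | 0 => fun _ => False
  | j'.+1 => fun x => phi_gens C act chi j' x \/ rel_gens C act (n - j') chi x
  end.

(** Kernel W_k of C ->> pi^(k,chi) = Psi^- (Phi^-_chi)^(k-1) (pi|_(P_n)):
    iterated quotients of C are quotients of C by a sum of submodules,
    so pi^(k,chi) = C / deriv_sub C act chi k, with G_(n-k) acting through
    emb_mx n (n-k). *)
Definition deriv_sub (M : lmodType R) (C : M -> Prop) (n : nat)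
    (act : 'M[F]_n -> M -> M) (chi : F -> R) (k : nat) : M -> Prop :=
  rspan (fun x => phi_gens C act chi k.-1 x \/
                  rel_gens C act (n - k.-1) (fun _ => 1) x).

Definition lin_form (V : lmodType R) (l : V -> R^o) : Prop :=
  forall (a : R) (u v : V), l (a *: u + v) = a * l u + l v.

Definition dual_act (V : lmodType R) (n : nat) (rho : 'M[F]_n -> V -> V)
    (g : 'M[F]_n) (l : V -> R^o) : V -> R^o :=
  fun v => l (rho (invmx g) v).

(** (pi^(k,chi))^vee = linear forms on V vanishing on W_k. *)
Definition dual_of_deriv (V : lmodType R) (n : nat) (rho : 'M[F]_n -> V -> V)
    (chi : F -> R) (k : nat) (l : V -> R^o) : Prop :=
  lin_form l /\ forall v, deriv_sub (fun _ => True) rho chi k v -> l v = 0.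

(** Isomorphism of R[G_(n-k)]-modules
      (pi^(k,chi))^vee  ~=  (pi^vee)^(k,chi') = V^vee / W'_k ,
    expressed as an R-linear, G_(n-k)-equivariant map Phi from V^vee onto
    (pi^(k,chi))^vee whose kernel is exactly W'_k. *)
Definition dual_deriv_iso (V : lmodType R) (n : nat) (rho : 'M[F]_n -> V -> V)
    (chi chi' : F -> R) (k : nat) : Prop :=
  exists Phi : (V -> R^o) -> (V -> R^o),
    [/\ (forall l, lin_form l -> dual_of_deriv rho chi k (Phi l)),
        (forall (a : R) l h, lin_form l -> lin_form h ->
           Phi (a *: l + h) = a *: Phi l + Phi h),
        (forall (g : 'M[F]_(n - k)) l, g \in unitmx -> lin_form l ->
           Phi (dual_act rho (emb_mx n g) l) = dual_act rho (emb_mx n g) (Phi l)),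
        (forall l', dual_of_deriv rho chi k l' ->
           exists l, lin_form l /\ Phi l = l') &
        (forall l, lin_form l ->
           (Phi l = 0 <-> deriv_sub (@lin_form V) (dual_act rho) chi' k l))].

End Defs.

(* Main.v *)
Require Import Defs.
From HB Require Import structures.
From mathcomp Require Import all_boot all_order all_algebra all_field.
From mathcomp Require Import boolp classical_sets functions.
From mathcomp Require abelian pgroup.
From mathcomp Require Import zify.
Import GRing.Theory.
Local Open Scope ring_scope.

Section Span.
Variables (R : comPzRingType) (M : lmodType R) (S : M -> Prop).

Lemma rspan0 : rspan S 0.
Proof. by exists [::], (fun _ => 0); split=> //; rewrite big_ord0. Qed.

Lemma rspan_cons g x c : S g -> rspan S x -> rspan S (c *: g + x).
Proof.
move=> Sg [s [c0 [Ss ->]]].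
pose c' := fun i : 'I_(size (g :: s)) =>
  match unlift ord0 i with Some j => c0 j | None => c end.
exists (g :: s), c'; split.
  by case=> [|i] //= /Ss.
rewrite big_ord_recl /c' unlift_none /=; congr (_ + _).
by apply: eq_bigr => i _; rewrite liftK.
Qed.

Lemma rspan_add x y : rspan S x -> rspan S y -> rspan S (x + y).
Proof.
case=> s [c [Ss ->]] Sy; elim: s c Ss => [|g s IH] c Ss.
  by rewrite big_ord0 add0r.
rewrite big_ord_recl -addrA; apply: rspan_cons; first exact: (Ss 0%N).
apply: IH => i lt_i; exact: (Ss i.+1).
Qed.

Lemma rspan_scale a x : rspan S x -> rspan S (a *: x).
Proof.
case=> s [c [Ss ->]]; exists s, (fun i => a * c i); split=> //.
by rewrite scaler_sumr; apply: eq_bigr => i _; rewrite scalerA.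
Qed.

Lemma rspan_gen x : S x -> rspan S x.
Proof. by move=> Sx; rewrite -[x]addr0 -[x]scale1r; apply: rspan_cons => //; exact: rspan0. Qed.

Lemma rspan_opp x : rspan S x -> rspan S (- x).
Proof. by move=> Sx; rewrite -scaleN1r; apply: rspan_scale. Qed.

Lemma rspan_sum (I : finType) (P : pred I) (F : I -> M) :
  (forall i, P i -> rspan S (F i)) -> rspan S (\sum_(i | P i) F i).
Proof.
move=> H; apply: (big_ind (rspan S)) => //; [exact: rspan0 | exact: rspan_add].
Qed.

End Span.


Lemma card_F_p (F : finFieldType) p : p \in [pchar F] -> exists r, #|F| = (p ^ r)%N.
Proof.
move=> pc; have /abelian.abelem_pgroup pg := abelian.fin_ring_pchar_abelem pc.
have [r] := p_natP pg; rewrite cardsT => ->; by exists r.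
Qed.

Lemma rspan_kill (R : comPzRingType) (X Y : lmodType R) (S : X -> Prop) (f : X -> Y) :
  (forall c x y, f (c *: x + y) = c *: f x + f y) -> (forall x, S x -> f x = 0) ->
  forall x, rspan S x -> f x = 0.
Proof.
move=> L K x [s [c [Ss ->]]].
have f0 : f 0 = 0.
  have := L 1 0 0; rewrite !scale1r addr0 => H.
  by apply: (addrI (f 0)); rewrite addr0 -H.
have fD : forall u v, f (u + v) = f u + f v.
  by move=> u v; have := L 1 u v; rewrite !scale1r.
rewrite (big_morph _ fD f0) big1 // => i _.
by have := L (c i) s`_i 0; rewrite !addr0 f0 addr0 (K s`_i) ?scaler0 //; exact: (Ss i (ltn_ord i)).
Qed.

Lemma reindex_set (T : finType) (X : nmodType) (A : {set T}) (h : T -> T) (G : T -> X) :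
  {in A &, injective h} -> (forall x, x \in A -> h x \in A) ->
  \sum_(x in A) G (h x) = \sum_(x in A) G x.
Proof.
move=> inj hA; rewrite -(big_imset G inj) /=.
have -> // : h @: A = A.
apply/eqP; rewrite eqEcard card_in_imset // leqnn andbT.
by apply/fintype.subsetP => _ /finset.imsetP [x xA ->]; exact: hA.
Qed.

Section Mx.
Variables (F : finFieldType) (n a : nat).
Local Notation MF := 'M[F]_n.

Definition inN (M : MF) : bool :=
  [forall i : 'I_n, forall j : 'I_n,
     ((a <= j)%N && (i < j)%N) || (M i j == (i == j)%:R)].
Definition Nset : {set MF} := [set M | inN M].

Lemma inNP (M : MF) : reflect (forall i j : 'I_n, ~~ ((a <= j)%N && (i < j)%N) -> M i j = (i == j)%:R)
  (M \in Nset).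
Proof.
rewrite inE; apply: (iffP forallP) => H.
  move=> i j nc; have /forallP/(_ j) := H i.
  by rewrite (negbTE nc) /= => /eqP.
move=> i; apply/forallP => j.
by case: ((a <= j)%N && (i < j)%N) (H i j) => //= ->.
Qed.

Lemma N_diag (M : MF) i : M \in Nset -> M i i = 1.
Proof. by move/inNP/(_ i i); rewrite ltnn andbF eqxx => ->. Qed.

Lemma N_low (M : MF) (i j : 'I_n) : M \in Nset -> (j < i)%N -> M i j = 0.
Proof.
move/inNP=> H lt; rewrite H; last by rewrite negb_and -[(i < j)%N]negbK -leqNgt (ltnW lt) orbT.
by rewrite eq_sym -(inj_eq val_inj) /= (ltn_eqF lt).
Qed.

Lemma N_col (M : MF) (i j : 'I_n) : M \in Nset -> (j < a)%N -> M i j = (i == j)%:R.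
Proof. by move/inNP=> H lt; rewrite H // negb_and -ltnNge lt. Qed.

Arguments N_diag {M} i.
Arguments N_low {M i j}.
Arguments N_col {M i j}.

Lemma sum_if (X : nmodType) (i0 : 'I_n) (c : X) :
  \sum_(l < n) (if l == i0 then c else 0) = c.
Proof. by rewrite -big_mkcond big_pred1_eq. Qed.

Arguments sum_if {X} i0 c.

Lemma N1 : 1%:M \in Nset.
Proof. by apply/inNP => i j _; rewrite mxE. Qed.

Lemma NM (M1 M2 : MF) : M1 \in Nset -> M2 \in Nset -> M1 *m M2 \in Nset.
Proof.
move=> N1 N2; apply/inNP => i j nc; rewrite mxE.
case: (ltnP j a) => ja.
  rewrite -[RHS](sum_if j).
  apply: eq_bigr => l _; rewrite (N_col N2) //.
  case: eqP => [->|_]; first by rewrite mulr1 (N_col N1).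
  by rewrite mulr0.
have ij : ~~ (i < j)%N by move: nc; rewrite ja.
rewrite -[RHS](sum_if i); apply: eq_bigr => l _.
case: eqP => [->|/eqP ne]; first by rewrite N_diag // mul1r (inNP _ N2) // ja.
case: (ltngtP l i) => li; first by rewrite (N_low N1) ?mul0r.
  by rewrite (N_low N2) ?mulr0 //; rewrite -leqNgt in ij; exact: leq_ltn_trans ij li.
by move/val_inj: li ne => ->; rewrite eqxx.
Qed.

Lemma N_unit (M : MF) : M \in Nset -> M \in unitmx.
Proof.
move=> MN; rewrite unitmxE -det_tr det_trig.
  by rewrite big1 ?unitr1 // => i _; rewrite mxE N_diag.
by apply/is_trig_mxP => i j lt; rewrite mxE (N_low MN).
Qed.
Arguments N_unit {M}.

Definition Ymx (m : nat) (y : nat -> F) : MF :=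
  \matrix_(i < n, j < n) (if (j == m.-1 :> nat) && (i < m.-1)%N then y (nat_of_ord i) else 0).

Lemma unipE m (y : nat -> F) : unip_mx n m y = 1%:M + Ymx m y.
Proof. by apply/matrixP => i j; rewrite !mxE. Qed.

Lemma YmxN m (y : nat -> F) : Ymx m (fun i => - y i) = - Ymx m y.
Proof. by apply/matrixP => i j; rewrite !mxE; case: ifP; rewrite ?oppr0. Qed.

Lemma YmxM m (y y' : nat -> F) : Ymx m y *m Ymx m y' = 0.
Proof.
apply/matrixP => i j; rewrite !mxE big1 // => l _; rewrite !mxE.
by case: eqP => [->|_]; rewrite ?ltnn ?andbF ?andFb ?mulr0 ?mul0r.
Qed.

Lemma unip_invK m (y : nat -> F) : unip_mx n m (fun i => - y i) *m unip_mx n m y = 1%:M.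
Proof.
rewrite !unipE YmxN mulmxDl mul1mx mulmxDr mulmx1 mulNmx YmxM oppr0 addr0.
by rewrite addrK.
Qed.

Lemma unip_Kinv m (y : nat -> F) : unip_mx n m y *m unip_mx n m (fun i => - y i) = 1%:M.
Proof.
rewrite !unipE YmxN mulmxDl mul1mx mulmxDr mulmx1 mulmxN YmxM oppr0 addr0.
by rewrite addrNK.
Qed.

Lemma invmx_unip m (y : nat -> F) : invmx (unip_mx n m (fun i => - y i)) = unip_mx n m y.
Proof.
have [U _] := mulmx1_unit (unip_invK m y).
by rewrite -[RHS]mul1mx -(mulVmx U) -mulmxA unip_invK mulmx1.
Qed.

Lemma unip_N t (y : nat -> F) : (a <= t)%N -> unip_mx n t.+1 y \in Nset.
Proof.
move=> at_; apply/inNP => i j nc; rewrite mxE /=.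
case: (eqVneq (nat_of_ord j) t) => [jt|jt]; last by rewrite andFb addr0.
by move: nc; rewrite jt at_ /= => /negbTE ->; rewrite addr0.
Qed.

Definition prv (j : 'I_n) : 'I_n := insubd j j.-1.

Lemma prvE j : val (prv j) = j.-1.
Proof. by rewrite val_insubd (leq_ltn_trans (leq_pred j) (ltn_ord j)). Qed.

Lemma prv_neq (j : 'I_n) : (0 < j)%N -> (prv j == j) = false.
Proof.
move=> j0; apply/negbTE; rewrite -(inj_eq val_inj) /= prvE.
by move: j0; case: (nat_of_ord j) => // m _ /=; rewrite neq_ltn ltnSn.
Qed.

Lemma prv_lt (j l : 'I_n) : (0 < j)%N -> (prv j < l)%N -> (j <= l)%N.
Proof. by move=> j0; rewrite prvE; move: j0; case: (nat_of_ord j). Qed.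

Arguments prv_neq {j}.
Arguments prv_lt {j l}.

Lemma N_ind (P : MF -> Prop) :
  P 1%:M -> (forall t (y : nat -> F), (a <= t < n)%N -> P (unip_mx n t.+1 y)) ->
  (forall M1 M2, M1 \in Nset -> M2 \in Nset -> P M1 -> P M2 -> P (M1 *m M2)) ->
  forall M, M \in Nset -> P M.
Proof.
move=> P1 Pu PM M MN.
suff H : forall s M, M \in Nset ->
    (forall i j : 'I_n, (a + s <= j)%N -> M i j = (i == j)%:R) -> P M.
  apply: (H (n - a)%N M MN) => i j le; exfalso.
  have : (n <= a + (n - a))%N by rewrite -leq_subLR.
  by move/leq_trans/(_ le); rewrite leqNgt ltn_ord.
elim=> [|s IH] {}M {}MN Hs.
  suff -> : M = 1%:M by [].
  apply/matrixP => i j; rewrite mxE; case: (ltnP j a) => ja.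
    exact: (N_col MN).
  by apply: Hs; rewrite addn0.
case: (ltnP (a + s) n) => tn; last first.
  apply: IH => // i j le; apply: Hs.
  by have := leq_trans tn le; rewrite leqNgt ltn_ord.
set t := (a + s)%N in tn Hs IH *.
pose T : 'I_n := Ordinal tn.
pose y := fun i : nat => mx_at M i t.
pose M' : MF := \matrix_(i, j) (if j == T then (i == j)%:R else M i j).
have M'T : forall j, M' T j = (T == j)%:R.
  move=> j; rewrite mxE; case: eqP => // /eqP jT.
  case: (ltngtP j T) => jt.
  - by rewrite (N_low MN) // eq_sym (negbTE jT).
  - by rewrite Hs // addnS.
  - by move/val_inj: jt jT => ->; rewrite eqxx.
have M'N : M' \in Nset.
  apply/inNP => i j nc; rewrite mxE; case: eqP => // _; exact: (inNP _ MN).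
have Hs' : forall i j : 'I_n, (t <= j)%N -> M' i j = (i == j)%:R.
  move=> i j; rewrite leq_eqVlt => /orP [/eqP tj | lt].
    by rewrite mxE (_ : j == T) //; apply/eqP/val_inj.
  rewrite mxE (_ : (j == T) = false); last by apply/negbTE; rewrite -(inj_eq val_inj) /= neq_ltn lt orbT.
  by apply: Hs; rewrite addnS.
have E : M = unip_mx n t.+1 y *m M'.
  rewrite unipE mulmxDl mul1mx; apply/matrixP => i j; rewrite !mxE.
  rewrite (eq_bigr (fun l => if l == T then (if (i < t)%N then y i else 0) * M' T j else 0)); last first.
    move=> l _; rewrite !mxE /=.
    case: (eqVneq (nat_of_ord l) t) => [lT|lT].
      have -> : l = T by apply/val_inj.
      by rewrite eqxx.

    rewrite andFb mul0r (_ : (l == T) = false) //.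
    by apply/negbTE; rewrite -(inj_eq val_inj).
  rewrite sum_if M'T.
  case: (eqVneq j T) => [->|jT]; last by rewrite ?mulr0 ?addr0.
  rewrite ?eqxx mulr1 /y /mx_at valK.
  case: insubP => [u _ /= uE|]; last by rewrite /= tn.
  have -> : u = T by apply/val_inj.
  case: (ltngtP i T) => iT.
  - by rewrite (_ : (i == T) = false) ?add0r //; apply/negbTE; rewrite neq_ltn iT.
  - by rewrite (_ : (i == T) = false) ?add0r ?(N_low MN) //; apply/negbTE; rewrite neq_ltn iT orbT.
  - have -> : i = T by apply/val_inj.
    by rewrite eqxx /= addr0 (N_diag _ MN).
rewrite E; apply: PM => //; first exact: unip_N (leq_addr _ _).
  by apply: Pu; rewrite leq_addr tn.
by apply: IH.
Qed.

Section Theta.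
Variables (R : comPzRingType) (psi : F -> R).
Hypotheses (psiD : forall x y, psi (x + y) = psi x * psi y) (psi0 : psi 0 = 1).

Definition theta (M : MF) : R := \prod_(j : 'I_n | (a < j)%N) psi (M (prv j) j).

Lemma NM_sup (M1 M2 : MF) (j : 'I_n) : M1 \in Nset -> M2 \in Nset -> (a < j)%N ->
  (M1 *m M2) (prv j) j = M1 (prv j) j + M2 (prv j) j.
Proof.
move=> N1 N2 aj; have j0 : (0 < j)%N by exact: leq_ltn_trans aj.
have pj := prv_neq j0.
rewrite mxE -[M1 _ j](sum_if j) -[M2 _ j](sum_if (prv j)) -big_split.
apply: eq_bigr => l _ /=.
case: (eqVneq l j) => [->|lj]; first by rewrite N_diag // mulr1 eq_sym pj addr0.
case: (eqVneq l (prv j)) => [->|lp]; first by rewrite N_diag // mul1r add0r.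
rewrite add0r; case: (ltngtP l (prv j)) => lt.
- by rewrite (N_low N1) // mul0r.
- rewrite (N_low N2) ?mulr0 //.
  have := prv_lt j0 lt; rewrite leq_eqVlt => /orP [/eqP e|//].
  by move: lj; rewrite -(inj_eq val_inj) /= e eqxx.
- by move/val_inj: lt lp => ->; rewrite eqxx.
Qed.

Lemma theta_mul (M1 M2 : MF) : M1 \in Nset -> M2 \in Nset ->
  theta (M1 *m M2) = theta M1 * theta M2.
Proof.
move=> N1 N2; rewrite /theta -big_split /=; apply: eq_bigr => j aj.
by rewrite NM_sup // psiD.
Qed.

Lemma theta1 : theta 1%:M = 1.
Proof.
rewrite /theta big1 // => j aj; rewrite mxE.
have j0 : (0 < j)%N by exact: leq_ltn_trans aj.
by rewrite prv_neq ?psi0.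
Qed.

Lemma theta_unip t (y : nat -> F) : (a <= t < n)%N ->
  theta (unip_mx n t.+1 y) = if (a < t)%N then psi (y t.-1) else 1.
Proof.
case/andP=> at_ tn; rewrite /theta.
rewrite (eq_bigr (fun j : 'I_n => if j == Ordinal tn then psi (y t.-1) else 1)); last first.
  move=> j aj; rewrite mxE /=.
  have j0 : (0 < j)%N by exact: leq_ltn_trans aj.
  rewrite prv_neq ?add0r //.
  rewrite -(inj_eq val_inj) /=.
  case: (eqVneq (nat_of_ord j) t) => [jt|jt] /=; last by rewrite psi0.
  have t0 : (0 < t)%N by rewrite -jt.
  by rewrite prvE jt ltn_predL t0.
case: ifP => at'.
  rewrite (bigD1 (Ordinal tn)) //= eqxx big1 ?mulr1 // => j /andP [_ ne].
  by rewrite (negbTE ne).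
rewrite big1 // => j aj; case: eqP => // jt.
by move: aj at'; rewrite jt /= => ->.
Qed.

End Theta.
Arguments theta {R} psi M.

Lemma theta_inv (R : comPzRingType) (psi : F -> R) M :
  (forall x y, psi (x + y) = psi x * psi y) -> psi 0 = 1 ->
  theta psi M * theta (fun x => psi (- x)) M = 1.
Proof.
move=> psiD psi0; rewrite /theta -big_split big1 //= => j _.
by rewrite -psiD subrr.
Qed.

Definition blk (E : MF) := forall i j : 'I_n, ((a <= i) || (a <= j))%N -> E i j = (i == j)%:R.

Lemma emb_blk (g : 'M[F]_a) : blk (emb_mx n g).
Proof.
move=> i j c; rewrite mxE; case: ifP => // /andP [ia ja].
by move: c; rewrite leqNgt ia leqNgt ja.
Qed.

Lemma blk_mulr (E A : MF) : blk E -> (forall i l : 'I_n, (l < a)%N -> A i l = 0) -> A *m E = A.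
Proof.
move=> bE A0; apply/matrixP => i j; rewrite mxE -[RHS](sum_if j); apply: eq_bigr => l _.
case: (ltnP l a) => la.
  by rewrite A0 // mul0r; case: eqP => // e; rewrite -e A0.
by rewrite bE ?la //; case: eqP => [->|_]; rewrite ?mulr1 ?mulr0.
Qed.

Lemma blk_mull_row (E A : MF) (i j : 'I_n) : blk E -> (a <= i)%N -> (E *m A) i j = A i j.
Proof.
move=> bE ai; rewrite mxE -[RHS](sum_if i); apply: eq_bigr => l _.
rewrite bE ?ai // eq_sym; case: eqP => [->|_]; by rewrite ?mul1r ?mul0r.
Qed.

Lemma mull_zero (E A : MF) (i j : 'I_n) : (forall l, A l j = 0) -> (E *m A) i j = 0.
Proof. by move=> A0; rewrite mxE big1 // => l _; rewrite A0 mulr0. Qed.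

Lemma conj_entry (E E' M : MF) (i j : 'I_n) : blk E -> blk E' -> E *m E' = 1%:M -> M \in Nset ->
  (E *m M *m E') i j = if (a <= i)%N then M i j else
                       if (j < a)%N then (i == j)%:R else (E *m M *m E') i j.
Proof.
move=> bE bE' EE' MN.
have -> : E *m M *m E' = 1%:M + E *m (M - 1%:M).
  rewrite -{1}(subrK 1%:M M) mulmxDr mulmx1 mulmxDl EE' addrC.
  rewrite -mulmxA (blk_mulr _ _ bE') // => i' l la; rewrite !mxE (N_col MN) //.
  by rewrite subrr.
case: ifP => ai; first by rewrite mxE blk_mull_row // !mxE addrC subrK.
case: ifP => ja //; rewrite mxE [X in _ + X]mull_zero ?addr0; first by rewrite mxE.
by move=> l; rewrite !mxE (N_col MN) // subrr.
Qed.

Lemma conj_N (E E' M : MF) : blk E -> blk E' -> E *m E' = 1%:M -> M \in Nset ->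
  E *m M *m E' \in Nset.
Proof.
move=> bE bE' EE' MN; apply/inNP => i j nc; rewrite conj_entry //.
case: (ltnP j a) => ja.
  by case: ifP => // ai; rewrite (N_col MN).
have ij : (j <= i)%N by move: nc; rewrite ja /= -leqNgt.
rewrite (leq_trans ja ij); exact: (inNP _ MN).
Qed.

Lemma theta_conj (R : comPzRingType) (psi : F -> R) (E E' M : MF) :
  blk E -> blk E' -> E *m E' = 1%:M -> M \in Nset ->
  theta psi (E *m M *m E') = theta psi M.
Proof.
move=> bE bE' EE' MN; apply: eq_bigr => j aj; rewrite conj_entry //.
rewrite (_ : (a <= prv j)%N) // prvE.
by move: aj; case: (nat_of_ord j).
Qed.

Lemma mx_atE m (g : 'M[F]_m) i j (hi : (i < m)%N) (hj : (j < m)%N) :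
  mx_at g i j = g (Ordinal hi) (Ordinal hj).
Proof. by rewrite /mx_at !insubT. Qed.

Lemma mx_atEl m (g : 'M[F]_m) i (l : 'I_m) (hi : (i < m)%N) :
  mx_at g i l = g (Ordinal hi) l.
Proof. by rewrite /mx_at valK insubT. Qed.

Lemma mx_atEr m (g : 'M[F]_m) i (l : 'I_m) (hi : (i < m)%N) :
  mx_at g l i = g l (Ordinal hi).
Proof. by rewrite /mx_at valK insubT. Qed.

Lemma emb_mul (g h : 'M[F]_a) : (a <= n)%N ->
  emb_mx n g *m emb_mx n h = emb_mx n (g *m h).
Proof.
move=> an; apply/matrixP => i j.
case: (ltnP j a) => ja; last first.
  rewrite (emb_blk _ _ _) ?ja ?orbT // mxE -[RHS](sum_if j); apply: eq_bigr => l _.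
  rewrite (emb_blk h l j) ?ja ?orbT //.
  case: eqP => [->|_]; rewrite ?mulr1 ?mulr0 //.
  by rewrite emb_blk ?ja ?orbT.
case: (ltnP i a) => ia; last first.
  by rewrite (blk_mull_row _ _ _ _ (emb_blk g) ia) !(emb_blk _ i j) ?ia.
rewrite [RHS]mxE ia ja /= (mx_atE _ _ _ _ ia ja) !mxE.
rewrite (eq_bigr (fun l : 'I_n => if (l < a)%N then mx_at g i l * mx_at h l j else 0)); last first.
  move=> l _; rewrite !mxE ia ja /=; case: ifP => // la.
  rewrite (_ : (i == l) = false) ?mul0r //.
  have al : (a <= l)%N by rewrite leqNgt la.
  by apply/negbTE; rewrite -(inj_eq val_inj) /= neq_ltn (leq_trans ia al).
rewrite -big_mkcond (big_ord_narrow an) /=; apply: eq_bigr => l _.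
by rewrite (mx_atEl _ _ _ _ ia) (mx_atEr _ _ _ _ ja).
Qed.

Lemma emb1 : emb_mx n (1%:M : 'M[F]_a) = 1%:M.
Proof.
apply/matrixP => i j; rewrite !mxE; case: ifP => // /andP [ia ja].
by rewrite (mx_atE _ _ _ _ ia ja) mxE.
Qed.

Local Notation Pos := {x : 'I_n * 'I_n | (a <= x.2)%N && (x.1 < x.2)%N}.

Definition mkM (g : {ffun Pos -> F}) : MF :=
  \matrix_(i, j) match (insub (i, j) : option Pos) with Some x => g x | None => (i == j)%:R end.

Lemma mkM_inj : injective mkM.
Proof.
move=> g1 g2 E; apply/ffunP => x.
have := congr1 (fun M : MF => M (val x).1 (val x).2) E; rewrite !mxE.
by rewrite -surjective_pairing valK.
Qed.

Lemma N_mk : Nset = mkM @: [set: {ffun Pos -> F}].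
Proof.
apply/setP => M; apply/idP/imsetP.
  move=> MN; exists [ffun x : Pos => M (val x).1 (val x).2] => //.
  apply/matrixP => i j; rewrite mxE; case: insubP => [x _ xE|].
    by rewrite ffunE xE.
  by move=> nc; rewrite (inNP _ MN).
case=> g _ ->; apply/inNP => i j nc; rewrite mxE.
by case: insubP => [x Px _|//]; rewrite Px in nc.
Qed.

Lemma card_N : #|Nset| = (#|F| ^ #|{: Pos}|)%N.
Proof. by rewrite N_mk card_imset ?cardsT ?card_ffun //; exact: mkM_inj. Qed.


Section Main.
Variables (R : comPzRingType) (V : lmodType R) (rho : MF -> V -> V).
Hypothesis Hrho : is_GLrep rho.
Variable psi : F -> R.
Hypotheses (psiD : forall x y, psi (x + y) = psi x * psi y) (psi0 : psi 0 = 1).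
Variable cN : R.
Hypothesis HcN : #|Nset|%:R * cN = 1.

Local Notation th := (theta psi).
Local Notation thb := (theta (fun x => psi (- x))).

Lemma psiD' x y : psi (- (x + y)) = psi (- x) * psi (- y).
Proof. by rewrite opprD psiD. Qed.
Lemma psi0' : psi (- 0) = 1.
Proof. by rewrite oppr0 psi0. Qed.

Lemma thbth M : thb M * th M = 1.
Proof. by rewrite mulrC theta_inv. Qed.

Lemma rhoL g : g \in unitmx -> forall (c : R) u v, rho g (c *: u + v) = c *: rho g u + rho g v.
Proof. by case: Hrho => H _ _; exact: H. Qed.
Arguments rhoL {g}.

Lemma rho0 g : g \in unitmx -> rho g 0 = 0.
Proof.
move=> U; have := rhoL U 1 0 0; rewrite scale1r addr0 => H.
by rewrite scale1r in H; apply: (addrI (rho g 0)); rewrite addr0 -H.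
Qed.
Arguments rho0 {g}.

Lemma rhoD g : g \in unitmx -> forall u v, rho g (u + v) = rho g u + rho g v.
Proof. by move=> U u v; have := rhoL U 1 u v; rewrite !scale1r. Qed.
Arguments rhoD {g}.

Lemma rhoZ g : g \in unitmx -> forall (c : R) u, rho g (c *: u) = c *: rho g u.
Proof. by move=> U c u; have := rhoL U c u 0; rewrite !addr0 rho0 // addr0. Qed.
Arguments rhoZ {g}.

Lemma rho_sum g (I : finType) (P : pred I) (f : I -> V) : g \in unitmx ->
  rho g (\sum_(i | P i) f i) = \sum_(i | P i) rho g (f i).
Proof. move=> U; exact: (big_morph _ (rhoD U) (rho0 U)). Qed.

Lemma rhoM g h v : g \in unitmx -> h \in unitmx -> rho (g *m h) v = rho g (rho h v).
Proof. by move=> Ug Uh; case: Hrho => _ _ H; exact: H Ug Uh v. Qed.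

Lemma rho1 v : rho 1%:M v = v.
Proof. by case: Hrho => _ H _; exact: H v. Qed.

Definition e (v : V) : V := cN *: \sum_(M in Nset) thb M *: rho M v.

Lemma e_lin c u v : e (c *: u + v) = c *: e u + e v.
Proof.
rewrite /e scalerA mulrC -scalerA -scalerDr; congr (_ *: _).
rewrite scaler_sumr -big_split /=; apply: eq_bigr => M MN.
by rewrite rhoL ?N_unit // scalerDr !scalerA mulrC.
Qed.

Lemma e_right u v : u \in Nset -> e (rho u v) = th u *: e v.
Proof.
move=> uN; rewrite /e scalerA mulrC -scalerA; congr (_ *: _).
rewrite scaler_sumr.
rewrite (eq_bigr (fun M => (fun X => th u *: (thb X *: rho X v)) (M *m u))); last first.
  move=> M MN /=; rewrite scalerA rhoM ?N_unit // (theta_mul _ _ psiD') //.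
  by rewrite mulrCA theta_inv ?mulr1.
apply: reindex_set.
- by move=> M1 M2 _ _ /= E; rewrite -(mulmxK (N_unit uN) M1) E mulmxK // N_unit.
- by move=> M MN; exact: NM.
Qed.

Lemma e_left u v : u \in Nset -> rho u (e v) = th u *: e v.
Proof.
move=> uN; rewrite /e rhoZ ?N_unit // scalerA mulrC -scalerA; congr (_ *: _).
rewrite rho_sum ?N_unit // scaler_sumr.
rewrite (eq_bigr (fun M => (fun X => th u *: (thb X *: rho X v)) (u *m M))); last first.
  move=> M MN /=; rewrite scalerA rhoZ ?N_unit // rhoM ?N_unit // (theta_mul _ _ psiD') //.
  by rewrite mulrA theta_inv ?mul1r.
apply: reindex_set.
- by move=> M1 M2 _ _ /= E; rewrite -(mulKmx (N_unit uN) M1) E mulKmx // N_unit.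
- by move=> M MN; exact: NM.
Qed.

Lemma e_conj E E' v : blk E -> blk E' -> E *m E' = 1%:M -> E' *m E = 1%:M ->
  e (rho E v) = rho E (e v).
Proof.
move=> bE bE' EE' E'E; have [UE UE'] := mulmx1_unit EE'.
rewrite /e rhoZ // rho_sum //; congr (_ *: _).
rewrite (eq_bigr (fun M => thb M *: rho (M *m E) v)); last first.
  by move=> M MN; rewrite rhoM //; apply: N_unit.
rewrite [RHS](eq_bigr (fun M => thb (E *m M *m E') *: rho (E *m M *m E' *m E) v)); last first.
  move=> M MN; rewrite rhoZ // (theta_conj _ _ _ _ _ bE bE' EE' MN) -rhoM //; last exact: N_unit.
  by rewrite -mulmxA E'E mulmx1.
rewrite (reindex_set _ _ _ (fun M => E *m M *m E') (fun M => thb M *: rho (M *m E) v)) //.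
- move=> M1 M2 _ _ /= eq.
  have := congr1 (fun X => E' *m X *m E) eq; rewrite /= !mulmxA E'E !mul1mx.
  by rewrite -!mulmxA E'E !mulmx1.
- by move=> M MN; exact: conj_N.
Qed.

Lemma avg_id (X : lmodType R) (x : X) (f : MF -> X) :
  x - cN *: \sum_(M in Nset) thb M *: f M =
  cN *: \sum_(M in Nset) (- thb M) *: (f M - th M *: x).
Proof.
have -> : \sum_(M in Nset) (- thb M) *: (f M - th M *: x) =
          \sum_(M in Nset) x - \sum_(M in Nset) thb M *: f M.
  rewrite -sumrB; apply: eq_bigr => M _.
  by rewrite scalerBr scalerA mulNr thbth !scaleNr scale1r opprK addrC.
by rewrite sumr_const scalerBr -scaler_nat scalerA mulrC HcN scale1r.
Qed.

Lemma e_W (G : V -> Prop) :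
  (forall M, M \in Nset -> forall v, rspan G (rho M v - th M *: v)) ->
  forall v, rspan G (v - e v).
Proof.
move=> H v; rewrite /e avg_id; apply: rspan_scale; apply: rspan_sum => M MN.
by apply: rspan_scale; apply: H.
Qed.

Lemma good_primal (G : V -> Prop) :
  (forall t (y : nat -> F) w, (a <= t < n)%N ->
     rspan G (rho (unip_mx n t.+1 y) w - th (unip_mx n t.+1 y) *: w)) ->
  forall M, M \in Nset -> forall v, rspan G (rho M v - th M *: v).
Proof.
move=> Hu; apply: N_ind.
- by move=> v; rewrite rho1 theta1 // scale1r subrr; exact: rspan0.
- by move=> t y tn w; apply: Hu.
move=> M1 M2 N1 N2 H1 H2 v.
have -> : rho (M1 *m M2) v - th (M1 *m M2) *: v =
    (rho M1 (rho M2 v) - th M1 *: rho M2 v) + th M1 *: (rho M2 v - th M2 *: v).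
  rewrite rhoM ?N_unit // (theta_mul _ _ psiD) // scalerBr scalerA addrA subrK //.
by apply: rspan_add; [apply: H1 | apply: rspan_scale; apply: H2].
Qed.

Lemma lin0 (l : V -> R^o) : lin_form l -> l 0 = 0.
Proof.
move=> L; have := L 1 0 0; rewrite scale1r addr0 mul1r => H.
by apply: (addrI (l 0)); rewrite addr0 -H.
Qed.

Lemma linD (l : V -> R^o) u v : lin_form l -> l (u + v) = l u + l v.
Proof. by move=> L; have := L 1 u v; rewrite scale1r mul1r. Qed.

Lemma linZ (l : V -> R^o) c u : lin_form l -> l (c *: u) = c * l u.
Proof. by move=> L; have := L c u 0; rewrite !addr0 lin0 // addr0. Qed.

Lemma lin_sum (l : V -> R^o) (I : finType) (P : pred I) (f : I -> V) : lin_form l ->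
  l (\sum_(i | P i) f i) = \sum_(i | P i) l (f i).
Proof. by move=> L; apply: (big_morph l (fun u v => linD l u v L) (lin0 l L)). Qed.

Lemma lin_rho M (l : V -> R^o) : M \in unitmx -> lin_form l -> lin_form (fun v => l (rho M v)).
Proof. by move=> U L c u v /=; rewrite rhoL // L. Qed.

Lemma good_dual (G : (V -> R^o) -> Prop) :
  (forall t (y : nat -> F) (l : V -> R^o), (a <= t < n)%N -> lin_form l ->
     rspan G ((fun v => l (rho (unip_mx n t.+1 y) v)) - th (unip_mx n t.+1 y) *: l)) ->
  forall M, M \in Nset -> forall l : V -> R^o, lin_form l ->
     rspan G ((fun v => l (rho M v)) - th M *: l).
Proof.
move=> Hu; apply: (N_ind (fun M => forall l : V -> R^o, lin_form l ->
     rspan G ((fun v => l (rho M v)) - th M *: l))).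
- move=> l _; rewrite theta1 // scale1r.
  have -> : (fun v => l (rho 1%:M v)) = l by apply/funext => v; rewrite rho1.
  by rewrite subrr; exact: rspan0.
- by move=> t y tn l L; apply: Hu.
move=> M1 M2 N1 N2 H1 H2 l L.
pose l1 := fun v => l (rho M1 v).
have -> : (fun v => l (rho (M1 *m M2) v)) - th (M1 *m M2) *: l =
    ((fun v => l1 (rho M2 v)) - th M2 *: l1) + th M2 *: (l1 - th M1 *: l).
  rewrite (theta_mul _ _ psiD) // scalerBr scalerA addrA subrK mulrC.
  by congr (_ - _); apply/funext => v; rewrite rhoM ?N_unit.
apply: rspan_add; first by apply: H2; apply: lin_rho => //; exact: N_unit.
by apply: rspan_scale; apply: H1.
Qed.

Definition Phi (l : V -> R^o) : V -> R^o := fun v => l (e v).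

Lemma Phi_sum (l : V -> R^o) : lin_form l ->
  Phi l = cN *: \sum_(M in Nset) thb M *: (fun v => l (rho M v)).
Proof.
move=> L; apply/funext => v; rewrite /Phi /e linZ // lin_sum //.
rewrite /= fct_sumE; congr (_ * _); apply: eq_bigr => M _.
by rewrite linZ.
Qed.

Lemma e_W_dual (G : (V -> R^o) -> Prop) :
  (forall M, M \in Nset -> forall l : V -> R^o, lin_form l ->
     rspan G ((fun v => l (rho M v)) - th M *: l)) ->
  forall l, lin_form l -> rspan G (l - Phi l).
Proof.
move=> H l L; rewrite Phi_sum // avg_id; apply: rspan_scale; apply: rspan_sum => M MN.
by apply: rspan_scale; apply: H.
Qed.

Section Final.
Variable k : nat.
Hypotheses (Hk : (1 <= k <= n)%N) (Ha : a = (n - k)%N).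

Lemma phi_gens_in (M : lmodType R) (C : M -> Prop) (act : MF -> M -> M) (chi0 : F -> R) j j' x :
  (j' < j)%N -> rel_gens C act (n - j') chi0 x -> phi_gens C act chi0 j x.
Proof.
elim: j => [//|j IH] lt H /=.
case: (ltnP j' j) => l; first by left; apply: IH.
have -> : j = j' by apply/eqP; rewrite eqn_leq l -ltnS lt.
by right.
Qed.

Lemma phi_gens_out (M : lmodType R) (C : M -> Prop) (act : MF -> M -> M) (chi0 : F -> R) j x :
  phi_gens C act chi0 j x -> exists2 j', (j' < j)%N & rel_gens C act (n - j') chi0 x.
Proof.
elim: j => [//|j IH] /= [/IH [j' lt H]|H].
  by exists j' => //; exact: ltnW.
by exists j.
Qed.

Local Notation gens C act chi0 := (fun x => phi_gens C act chi0 k.-1 x \/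
                                   rel_gens C act (n - k.-1) (fun _ => 1) x).

Lemma gen_mem (M : lmodType R) (C : M -> Prop) (act : MF -> M -> M) (chi0 : F -> R) t (y : nat -> F) w :
  (a <= t < n)%N -> C w ->
  rspan (gens C act chi0)
    (act (unip_mx n t.+1 y) w - (if (a < t)%N then chi0 (y t.-1) else 1) *: w).
Proof.
case/andP=> at_ tn Cw; apply: rspan_gen.
case: (ltnP a t) => at'.
  left; apply: (phi_gens_in _ _ _ _ _ (n - t.+1)%N); first by move: Hk at'; rewrite Ha; lia.
  have -> : (n - (n - t.+1))%N = t.+1 by move: tn; lia.
  by exists y, w.
right; have -> : (n - k.-1)%N = t.+1 by move: Hk at_ at'; rewrite Ha; lia.
by exists y, w.
Qed.

Lemma gen_class (M : lmodType R) (C : M -> Prop) (act : MF -> M -> M) (chi0 : F -> R) x :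
  gens C act chi0 x -> exists t (y : nat -> F) w, [/\ (a <= t < n)%N, C w &
    x = act (unip_mx n t.+1 y) w - (if (a < t)%N then chi0 (y t.-1) else 1) *: w].
Proof.
case=> [/phi_gens_out [j' lt [y [w [Cw ->]]]] | [y [w [Cw ->]]]].
  exists (n - j').-1, y, w.
  have E : (n - j')%N = (n - j').-1.+1 by move: Hk lt; lia.
  have at_ : (a < (n - j').-1)%N by move: Hk lt; rewrite Ha; lia.
  split => //; first by apply/andP; split; [exact: ltnW | move: Hk lt; lia].
  by rewrite at_ -E.
exists a, y, w; have E : (n - k.-1)%N = a.+1 by move: Hk; rewrite Ha; lia.
split => //; first by apply/andP; split => //; move: Hk; rewrite Ha; lia.
by rewrite ltnn E.
Qed.

Lemma eB u c w : e u - c *: e w = e (u - c *: w).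
Proof. by rewrite [in RHS]addrC -[in RHS]scaleNr e_lin scaleNr addrC. Qed.

Lemma P_gen_primal t (y : nat -> F) w : (a <= t < n)%N ->
  rspan (gens (fun _ : V => True) rho psi)
    (rho (unip_mx n t.+1 y) w - th (unip_mx n t.+1 y) *: w).
Proof. by move=> tn; rewrite theta_unip //; exact: gen_mem. Qed.

Lemma P_gen_dual t (y : nat -> F) (l : V -> R^o) : (a <= t < n)%N -> lin_form l ->
  rspan (gens (@lin_form R V) (dual_act rho) (fun x => psi (- x)))
    ((fun v => l (rho (unip_mx n t.+1 y) v)) - th (unip_mx n t.+1 y) *: l).
Proof.
move=> tn L; rewrite theta_unip //.
have -> : (fun v => l (rho (unip_mx n t.+1 y) v)) =
          dual_act rho (unip_mx n t.+1 (fun i => - y i)) l.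
  by rewrite /dual_act invmx_unip.
have -> : psi (y t.-1) = (fun x => psi (- x)) ((fun i => - y i) t.-1) by rewrite /= opprK.
by apply: gen_mem.
Qed.

Lemma P1 (l : V -> R^o) : lin_form l -> dual_of_deriv rho psi k (Phi l).
Proof.
move=> L; split; first by move=> c u v; rewrite /Phi e_lin; exact: L.
move=> v Hv; apply: (@rspan_kill R V R^o _ (Phi l) _ _ v Hv).
  by move=> c x y; rewrite /Phi e_lin; exact: L.
move=> x /gen_class [t [y [w [tn _ ->]]]].
have /andP [at_ _] := tn.
by rewrite /Phi -eB e_right ?unip_N // theta_unip // subrr lin0.
Qed.

Lemma P2 (c : R) (l h : V -> R^o) : Phi (c *: l + h) = c *: Phi l + Phi h.
Proof. by apply/funext => v. Qed.

Lemma P3 (g : 'M[F]_a) (l : V -> R^o) : g \in unitmx ->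
  Phi (dual_act rho (emb_mx n g) l) = dual_act rho (emb_mx n g) (Phi l).
Proof.
move=> Ug; have an : (a <= n)%N by rewrite Ha leq_subr.
have E1 : emb_mx n g *m emb_mx n (invmx g) = 1%:M by rewrite emb_mul // mulmxV // emb1.
have E2 : emb_mx n (invmx g) *m emb_mx n g = 1%:M by rewrite emb_mul // mulVmx // emb1.
have [U _] := mulmx1_unit E1.
have IE : invmx (emb_mx n g) = emb_mx n (invmx g).
  by rewrite -[RHS]mul1mx -(mulVmx U) -mulmxA E1 mulmx1.
apply/funext => v; rewrite /Phi /dual_act IE.
by rewrite (e_conj _ _ _ (emb_blk _) (emb_blk _) E2 E1).
Qed.

Lemma linN (l : V -> R^o) u : lin_form l -> l (- u) = - l u.
Proof. by move=> L; rewrite -scaleN1r linZ // mulN1r. Qed.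

Lemma P4 (l' : V -> R^o) : dual_of_deriv rho psi k l' -> exists l, lin_form l /\ Phi l = l'.
Proof.
case=> L K; exists l'; split => //; apply/funext => v; rewrite /Phi.
have := K _ (e_W _ (good_primal _ P_gen_primal) v).
by rewrite linD // linN // => /eqP; rewrite subr_eq0 => /eqP <-.
Qed.

Lemma P5 (l : V -> R^o) : lin_form l ->
  (Phi l = 0 <-> deriv_sub (@lin_form R V) (dual_act rho) (fun x => psi (- x)) k l).
Proof.
move=> L; split.
  by move=> H0; have := e_W_dual _ (good_dual _ P_gen_dual) l L; rewrite H0 subr0.
move=> H; apply: (@rspan_kill R (V -> R^o) (V -> R^o) _ Phi _ _ l H).
  by move=> c x y; exact: P2.
move=> x /gen_class [t [y [h [tn Lh ->]]]].
have /andP [at_ _] := tn.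
have yy : y = (fun i => - (- y i)) by apply/funext => i; rewrite opprK.
have PB : forall (A B : V -> R^o) (c : R), Phi (A - c *: B) = Phi A - c *: Phi B.
  by move=> A B c; apply/funext => v.
rewrite PB.
have -> : Phi (dual_act rho (unip_mx n t.+1 y) h) =
   (if (a < t)%N then (fun x => psi (- x)) (y t.-1) else 1) *: Phi h.
  apply/funext => v; rewrite /Phi /dual_act {1}yy invmx_unip e_left ?unip_N //.
  by rewrite linZ // theta_unip.
by rewrite subrr.
Qed.

End Final.

End Main.
End Mx.

Theorem corollary2p6 (p : nat) (F : finFieldType) (R : comPzRingType)
    (zeta : R) (f : {additive F -> 'Z_p})
    (V : lmodType R) (n : nat) (rho : 'M[F]_n -> V -> V) (k : nat) :
  prime p -> p \in [pchar F] ->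
  noetherian_ring R -> Zp_zeta_algebra p zeta ->
  (exists a : F, f a != 0) ->
  is_GLrep rho ->
  (1 <= k <= n)%N ->
  dual_deriv_iso rho (psiR zeta f) (psiR_inv zeta f) k.
Proof.
move=> pr pc _ [[r pr1] zsum] _ Hrho Hk.
have zp : zeta ^+ p = 1 by apply/eqP; rewrite -subr_eq0 subrX1 zsum mulr0.
have psiD : forall x y, psiR zeta f (x + y) = psiR zeta f x * psiR zeta f y.
  move=> x y; rewrite /psiR raddfD.
  have -> : nat_of_ord (f x + f y) = ((f x + f y) %% (Zp_trunc p).+2)%N by [].
  have zp' : zeta ^+ (Zp_trunc p).+2 = 1 by rewrite Zp_cast ?prime_gt1.
  by rewrite expr_mod // exprD.
have psi0 : psiR zeta f 0 = 1 by rewrite /psiR raddf0.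
have [cN HcN] : exists cN : R, #|Nset F n (n - k)|%:R * cN = 1.
  have [r' Fr] := card_F_p _ _ pc.
  have gen : forall m, exists c : R, (p%:R) ^+ m * c = 1.
    by move=> m; exists (r ^+ m); rewrite -exprMn pr1 expr1n.
  by rewrite card_N Fr -expnM natrX; apply: gen.
exists (Phi F n (n - k) R V rho (psiR zeta f) cN); split.
- by move=> l L; exact: (P1 F n (n - k) R V rho Hrho _ psiD psi0 cN k Hk erefl l L).
- by move=> c l h _ _; exact: P2.
- by move=> g l Ug _; exact: (P3 F n (n - k) R V rho Hrho _ cN k erefl g l Ug).
- by move=> l' H; exact: (P4 F n (n - k) R V rho Hrho _ psiD psi0 cN HcN k Hk erefl l' H).
- by move=> l L; exact: (P5 F n (n - k) R V rho Hrho _ psiD psi0 cN HcN k Hk erefl l L).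
Qed.
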